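(* Let $\phi$ be a quantum channel on $\mathcal M(d;\mathbb C)$, and let $\mathcal G_\phi$ be the (nonempty) set of limit points of the sequence $(\phi^n)_{n\in\mathbb N}$. Then either every element of $\mathcal G_\phi$ is entanglement-breaking, or no element of $\mathcal G_\phi$ is entanglement-breaking.
   Context: A quantum channel is a completely positive, trace-preserving linear map on $\mathcal M(d;\mathbb C)$; $\phi^n$ is its $n$-fold composition. A channel $\psi$ is entanglement-breaking if $(\psi\otimes I)(\rho)$ is separable for every bipartite state $\rho$. *)

(* Defs.v *)
From Stdlib Require Import Reals.
Open Scope R_scope.

Record C : Type := mkC { Re : R; Im : R }.

Definition C0 : C := mkC 0 0.
Definition C1 : C := mkC 1 0.
Definition RtoC (x : R) : C := mkC x 0.
Definition Cadd (z w : C) : C := mkC (Re z + Re w) (Im z + Im w).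
Definition Csub (z w : C) : C := mkC (Re z - Re w) (Im z - Im w).
Definition Cmul (z w : C) : C :=
  mkC (Re z * Re w - Im z * Im w) (Re z * Im w + Im z * Re w).
Definition Cconj (z : C) : C := mkC (Re z) (- Im z).
Definition Cmod (z : C) : R := sqrt (Re z * Re z + Im z * Im z).

Fixpoint Csum (n : nat) (f : nat -> C) : C :=
  match n with
  | O => C0
  | S n' => Cadd (Csum n' f) (f n')
  end.

Fixpoint Rsum (n : nat) (f : nat -> R) : R :=
  match n with
  | O => 0
  | S n' => Rsum n' f + f n'
  end.

Definition delta (i j : nat) : C := if Nat.eqb i j then C1 else C0.

(* A d x d complex matrix is a function of its row and column index; only the
   entries with indices < d are ever used. *)
Definition Mat := nat -> nat -> C.

(* A matrix on C^d (x) C^m, with entry X a al b be = <a,al| X |b,be>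
   (a, b < d index the first factor, al, be < m the second). *)
Definition BiMat := nat -> nat -> nat -> nat -> C.

Definition trace (d : nat) (A : Mat) : C := Csum d (fun i => A i i).

Definition bitrace (d m : nat) (X : BiMat) : C :=
  Csum d (fun a => Csum m (fun al => X a al a al)).

Definition psd (d : nat) (A : Mat) : Prop :=
  forall v : nat -> C,
    let q := Csum d (fun i => Csum d (fun j => Cmul (Cconj (v i)) (Cmul (A i j) (v j)))) in
    Im q = 0 /\ 0 <= Re q.

Definition bipsd (d m : nat) (X : BiMat) : Prop :=
  forall v : nat -> nat -> C,
    let q := Csum d (fun a => Csum m (fun al => Csum d (fun b => Csum m (fun be =>
               Cmul (Cconj (v a al)) (Cmul (X a al b be) (v b be)))))) in
    Im q = 0 /\ 0 <= Re q.

Definition state (d : nat) (A : Mat) : Prop := psd d A /\ trace d A = C1.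
Definition bistate (d m : nat) (X : BiMat) : Prop := bipsd d m X /\ bitrace d m X = C1.

(* Every linear map on M(d;C) is given in coordinates by an array K with
   (phi A)_{kl} = sum_{i,j<d} K k l i j * A_{ij}, i.e. K k l i j = (phi E_ij)_{kl}.
   Only indices < d matter. *)
Definition Superop := nat -> nat -> nat -> nat -> C.

Definition apply (d : nat) (K : Superop) (A : Mat) : Mat :=
  fun k l => Csum d (fun i => Csum d (fun j => Cmul (K k l i j) (A i j))).

Definition apply_tensor_id (d m : nat) (K : Superop) (X : BiMat) : BiMat :=
  fun a al b be => Csum d (fun i => Csum d (fun j => Cmul (K a b i j) (X i al j be))).

Definition idop : Superop := fun k l i j => Cmul (delta k i) (delta l j).

Definition compose (d : nat) (K L : Superop) : Superop :=
  fun k l i j => Csum d (fun p => Csum d (fun q => Cmul (K k l p q) (L p q i j))).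

Fixpoint power (d : nat) (K : Superop) (n : nat) : Superop :=
  match n with
  | O => idop
  | S n' => compose d K (power d K n')
  end.

Definition completely_positive (d : nat) (K : Superop) : Prop :=
  forall (m : nat) (X : BiMat), bipsd d m X -> bipsd d m (apply_tensor_id d m K X).

Definition trace_preserving (d : nat) (K : Superop) : Prop :=
  forall A : Mat, trace d (apply d K A) = trace d A.

Definition quantum_channel (d : nat) (K : Superop) : Prop :=
  completely_positive d K /\ trace_preserving d K.

Definition separable (d m : nat) (X : BiMat) : Prop :=
  exists (n : nat) (p : nat -> R) (rho sigma : nat -> Mat),
    (forall t, (t < n)%nat -> 0 <= p t /\ state d (rho t) /\ state m (sigma t)) /\
    Rsum n p = 1 /\
    (forall a al b be, (a < d)%nat -> (al < m)%nat -> (b < d)%nat -> (be < m)%nat ->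
       X a al b be = Csum n (fun t => Cmul (RtoC (p t)) (Cmul (rho t a b) (sigma t al be)))).

Definition entanglement_breaking (d : nat) (K : Superop) : Prop :=
  forall (m : nat) (X : BiMat), bistate d m X -> separable d m (apply_tensor_id d m K X).

(* psi is a limit point (cluster point) of the sequence (phi^n)_n, in the
   (finite-dimensional, hence norm-independent) topology of linear maps on M(d;C) *)
Definition limit_point (d : nat) (K L : Superop) : Prop :=
  forall (eps : R), 0 < eps -> forall N : nat, exists n : nat, (N <= n)%nat /\
    forall k l i j, (k < d)%nat -> (l < d)%nat -> (i < d)%nat -> (j < d)%nat ->
      Cmod (Csub (power d K n k l i j) (L k l i j)) < eps.

(* Main.v *)
Require Import Defs.
From Stdlib Require Import Reals.
From Stdlib Require Import ZArith Lra Lia List Classical ClassicalEpsilon FunctionalExtensionality Rtopology.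
Import Defs.
Open Scope R_scope.


Lemma BW1 (u : nat -> R) (B : R) : (forall t, Rabs (u t) <= B) ->
  exists L, forall eps, 0 < eps -> forall N, exists p, (N <= p)%nat /\ Rabs (u p - L) < eps.
Proof.
  intros Hb. destruct (Bolzano_Weierstrass u (fun c => -B <= c <= B) (compact_P3 _ _)) as [L HL].
  { intro n. specialize (Hb n). revert Hb; unfold Rabs; destruct Rcase_abs; lra. }
  exists L. intros eps He N.
  destruct (HL (disc L (mkposreal eps He)) N) as [p [Hp Hv]].
  { exists (mkposreal eps He). intros y Hy; exact Hy. }
  exists p. split; auto.
Qed.

Lemma BW1sub (u : nat -> R) (B : R) : (forall t, Rabs (u t) <= B) ->
  exists (tau : nat -> nat) (L : R), (forall t, (tau t < tau (S t))%nat) /\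
   forall eps, 0 < eps -> exists T, forall t, (T <= t)%nat -> Rabs (u (tau t) - L) < eps.
Proof.
  intros Hb. destruct (BW1 u B Hb) as [L HL].
  assert (Hg : forall N t, exists p, (N <= p)%nat /\ Rabs (u p - L) < / INR (S t)).
  { intros N t. apply HL. apply Rinv_0_lt_compat. apply lt_0_INR. lia. }
  assert (G : {g : nat -> nat -> nat | forall N t, (N <= g N t)%nat /\ Rabs (u (g N t) - L) < / INR (S t)}).
  { apply constructive_indefinite_description.
    exists (fun N t => proj1_sig (constructive_indefinite_description _ (Hg N t))).
    intros N t. exact (proj2_sig (constructive_indefinite_description _ (Hg N t))). }
  destruct G as [g Hgp].
  exists (fix tau t := match t with O => g O O | S t' => g (S (tau t')) (S t') end), L.
  split.
  - intro t. simpl. destruct (Hgp (S ((fix tau (t0 : nat) : nat :=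
         match t0 with
         | 0%nat => g 0%nat 0%nat
         | S t' => g (S (tau t')) (S t')
         end) t)) (S t)). lia.
  - intros eps He. destruct (archimed (/ eps)) as [Ha _].
    assert (Hz : (0 <= up (/ eps))%Z).
    { apply le_IZR. pose proof (Rinv_0_lt_compat eps He). lra. }
    exists (Z.to_nat (up (/ eps))). intros t Ht.
    assert (Hinv : / INR (S t) < eps).
    { assert (INR (S t) > / eps).
      { rewrite S_INR. apply le_INR in Ht. rewrite INR_IZR_INZ, Z2Nat.id in Ht by auto. lra. }
      assert (0 < / eps) by (apply Rinv_0_lt_compat; lra).
      apply Rlt_gt in H0.
      replace eps with (/ / eps) by (field; lra).
      apply Rinv_lt_contravar; auto. apply Rmult_lt_0_compat; lra. }
    destruct t as [|t].
    + simpl. destruct (Hgp 0%nat 0%nat). simpl in *. lra.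
    + simpl. match goal with |- context [g ?a ?b] => destruct (Hgp a b) end. lra.
Qed.

Lemma BWmulti (I : Type) (f : I -> nat -> R) (B : R) (l : list I) :
  (forall x t, In x l -> Rabs (f x t) <= B) ->
  exists (sg : nat -> nat) (g : I -> R), (forall t, (sg t < sg (S t))%nat) /\
   forall eps, 0 < eps -> exists T, forall t, (T <= t)%nat -> forall x, In x l ->
     Rabs (f x (sg t) - g x) < eps.
Proof.
  induction l as [|x l IH]; intros Hb.
  - exists (fun t => t), (fun _ => 0). split; [intro; lia|].
    intros eps He. exists O. intros t _ x [].
  - destruct IH as [sg [g [Hsg Hc]]]. { intros y t Hy. apply Hb. right; auto. }
    destruct (BW1sub (fun t => f x (sg t)) B) as [tau [L [Htau Hl]]].
    { intro t. apply Hb. left; auto. }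
    assert (Hmono : forall a b, (a <= b)%nat -> (tau a <= tau b)%nat).
    { intros a b Hab. induction Hab; auto. specialize (Htau m). lia. }
    assert (Hge : forall t, (t <= tau t)%nat).
    { induction t; [lia|]. specialize (Htau t). lia. }
    exists (fun t => sg (tau t)),
      (fun y => if excluded_middle_informative (y = x) then L else g y).
    split.
    + intro t. assert (Hm2 : forall a b, (a < b)%nat -> (sg a < sg b)%nat).
      { intros a b Hab. induction Hab. apply Hsg. specialize (Hsg m). lia. }
      apply Hm2, Htau.
    + intros eps He. destruct (Hc eps He) as [T1 H1]. destruct (Hl eps He) as [T2 H2].
      exists (Nat.max T1 T2). intros t Ht y Hy.
      destruct (excluded_middle_informative (y = x)) as [->|Hne].
      * apply H2. lia.
      * destruct Hy as [Hy|Hy]; [congruence|]. apply H1; auto. specialize (Hge t). lia.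
Qed.

Lemma Ceq (z w : C) : Re z = Re w -> Im z = Im w -> z = w.
Proof. destruct z, w; simpl; intros; subst; auto. Qed.

Ltac csimpl := unfold Cmul, Cadd, Csub, Cconj, C0, C1, RtoC in *; simpl in *.
Ltac cring := apply Ceq; csimpl; ring.

Lemma Csum_ext n f g : (forall i, (i < n)%nat -> f i = g i) -> Csum n f = Csum n g.
Proof. induction n; intros H; simpl; auto. rewrite IHn, H; auto. Qed.

Lemma Rsum_ext n f g : (forall i, (i < n)%nat -> f i = g i) -> Rsum n f = Rsum n g.
Proof. induction n; intros H; simpl; auto. rewrite IHn, H; auto. Qed.

Lemma Re_Csum n f : Re (Csum n f) = Rsum n (fun i => Re (f i)).
Proof. induction n; simpl; auto. rewrite IHn; auto. Qed.
Lemma Im_Csum n f : Im (Csum n f) = Rsum n (fun i => Im (f i)).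
Proof. induction n; simpl; auto. rewrite IHn; auto. Qed.

Lemma Csum_add n f g : Csum n (fun i => Cadd (f i) (g i)) = Cadd (Csum n f) (Csum n g).
Proof. induction n; simpl. cring. rewrite IHn. cring. Qed.

Lemma Csum_scal_l n c f : Cmul c (Csum n f) = Csum n (fun i => Cmul c (f i)).
Proof. induction n; simpl. cring. rewrite <- IHn. cring. Qed.

Lemma Csum_scal_r n c f : Cmul (Csum n f) c = Csum n (fun i => Cmul (f i) c).
Proof. induction n; simpl. cring. rewrite <- IHn. cring. Qed.

Lemma Csum_swap n m (f : nat -> nat -> C) :
  Csum n (fun i => Csum m (fun j => f i j)) = Csum m (fun j => Csum n (fun i => f i j)).
Proof.
  induction n; simpl.
  - induction m; simpl; auto. rewrite <- IHm. cring.
  - rewrite IHn. rewrite <- Csum_add. auto.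
Qed.

Lemma Csum_zero n f : (forall i, (i < n)%nat -> f i = C0) -> Csum n f = C0.
Proof. induction n; intros H; simpl; auto. rewrite IHn, H; auto. cring. Qed.

Lemma Csum_single n k f : (k < n)%nat -> (forall i, (i < n)%nat -> i <> k -> f i = C0) ->
  Csum n f = f k.
Proof.
  induction n; intros Hk H; [lia|]. simpl.
  destruct (Nat.eq_dec k n) as [->|Hne].
  - rewrite Csum_zero. cring. intros i Hi. apply H; lia.
  - rewrite IHn by (auto; lia). rewrite (H n) by lia. cring.
Qed.

Lemma Csum_two n k l f : (k < n)%nat -> (l < n)%nat -> k <> l ->
  (forall i, (i < n)%nat -> i <> k -> i <> l -> f i = C0) ->
  Csum n f = Cadd (f k) (f l).
Proof.
  induction n; intros Hk Hl Hkl H; [lia|]. simpl.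
  destruct (Nat.eq_dec k n) as [->|Hne].
  - rewrite (Csum_single n l) by (auto; try lia; intros; apply H; lia). cring.
  - destruct (Nat.eq_dec l n) as [->|Hne2].
    + rewrite (Csum_single n k) by (auto; try lia; intros; apply H; lia). auto.
    + rewrite IHn by (auto; try lia). rewrite (H n) by lia. cring.
Qed.

Lemma Csum_sub n f g : Csub (Csum n f) (Csum n g) = Csum n (fun i => Csub (f i) (g i)).
Proof. induction n; simpl. cring. rewrite <- IHn. cring. Qed.

Definition nb (z : C) : R := Rabs (Re z) + Rabs (Im z).

Lemma nb_ge0 z : 0 <= nb z.
Proof. unfold nb. pose proof (Rabs_pos (Re z)). pose proof (Rabs_pos (Im z)). lra. Qed.

Lemma nb_add z w : nb (Cadd z w) <= nb z + nb w.
Proof. unfold nb; csimpl. pose proof (Rabs_triang (Re z) (Re w)). pose proof (Rabs_triang (Im z) (Im w)). lra. Qed.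

Lemma nb_mul z w : nb (Cmul z w) <= nb z * nb w.
Proof.
  unfold nb; csimpl. destruct z as [a b], w as [c e]; simpl.
  unfold Rminus. pose proof (Rabs_triang (a*c) (-(b*e))). pose proof (Rabs_triang (a*e) (b*c)).
  rewrite Rabs_Ropp in H. rewrite !Rabs_mult in *.
  pose proof (Rabs_pos a). pose proof (Rabs_pos b). pose proof (Rabs_pos c). pose proof (Rabs_pos e).
  nra.
Qed.

Lemma nb_sub_mul a x y : nb (Csub (Cmul a x) (Cmul a y)) <= nb a * nb (Csub x y).
Proof.
  replace (Csub (Cmul a x) (Cmul a y)) with (Cmul a (Csub x y)) by cring. apply nb_mul.
Qed.

Lemma nb_Csum n f : nb (Csum n f) <= Rsum n (fun i => nb (f i)).
Proof.
  induction n; simpl. unfold nb; simpl; rewrite Rabs_R0; lra.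
  pose proof (nb_add (Csum n f) (f n)). lra.
Qed.

Lemma Rsum_le n f g : (forall i, (i < n)%nat -> f i <= g i) -> Rsum n f <= Rsum n g.
Proof. induction n; intros H; simpl. lra. pose proof (H n ltac:(lia)). pose proof (IHn ltac:(intros; apply H; lia)). lra. Qed.

Lemma Rsum_const_le n f c : (forall i, (i < n)%nat -> f i <= c) -> Rsum n f <= INR n * c.
Proof. induction n; intros H. simpl. lra. simpl Rsum. rewrite S_INR. pose proof (H n ltac:(lia)). pose proof (IHn ltac:(intros; apply H; lia)). lra. Qed.

Lemma Rsum_ge0 n f : (forall i, (i < n)%nat -> 0 <= f i) -> 0 <= Rsum n f.
Proof. induction n; intros H; simpl. lra. pose proof (H n ltac:(lia)). pose proof (IHn ltac:(intros; apply H; lia)). lra. Qed.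

Lemma Rsum_term n f k : (k < n)%nat -> (forall i, (i < n)%nat -> 0 <= f i) -> f k <= Rsum n f.
Proof.
  induction n; intros Hk H; [lia|]. simpl.
  destruct (Nat.eq_dec k n) as [->|Hne].
  - pose proof (Rsum_ge0 n f ltac:(intros; apply H; lia)). lra.
  - pose proof (IHn ltac:(lia) ltac:(intros; apply H; lia)). pose proof (H n ltac:(lia)). lra.
Qed.

Lemma nb_diff_Csum n f g : nb (Csub (Csum n f) (Csum n g)) <= Rsum n (fun i => nb (Csub (f i) (g i))).
Proof. rewrite Csum_sub. apply nb_Csum. Qed.

Lemma Cmod_le_nb z : Cmod z <= nb z.
Proof.
  unfold Cmod, nb. pose proof (Rabs_pos (Re z)). pose proof (Rabs_pos (Im z)).
  rewrite <- (sqrt_Rsqr (Rabs (Re z) + Rabs (Im z))) by lra.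
  apply sqrt_le_1_alt. unfold Rsqr.
  assert (Re z * Re z = Rabs (Re z) * Rabs (Re z)) by (rewrite <- Rabs_mult; rewrite Rabs_right; nra).
  assert (Im z * Im z = Rabs (Im z) * Rabs (Im z)) by (rewrite <- Rabs_mult; rewrite Rabs_right; nra).
  nra.
Qed.

Lemma nb_le_Cmod z : nb z <= 2 * Cmod z.
Proof.
  unfold Cmod, nb.
  assert (Ha : Rabs (Re z) <= sqrt (Re z * Re z + Im z * Im z)).
  { rewrite <- sqrt_Rsqr_abs. apply sqrt_le_1_alt. unfold Rsqr. nra. }
  assert (Hb : Rabs (Im z) <= sqrt (Re z * Re z + Im z * Im z)).
  { rewrite <- sqrt_Rsqr_abs. apply sqrt_le_1_alt. unfold Rsqr. nra. }
  lra.
Qed.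

Lemma nb_zero z : (forall eps, 0 < eps -> nb z < eps) -> z = C0.
Proof.
  intros H. unfold nb in H. apply Ceq; simpl.
  - destruct (Req_dec (Re z) 0) as [h|h]; auto. exfalso.
    pose proof (H (Rabs (Re z)) (Rabs_pos_lt _ h)). pose proof (Rabs_pos (Im z)). lra.
  - destruct (Req_dec (Im z) 0) as [h|h]; auto. exfalso.
    pose proof (H (Rabs (Im z)) (Rabs_pos_lt _ h)). pose proof (Rabs_pos (Re z)). lra.
Qed.

Lemma rearr d (a : nat -> nat -> C) (b : nat -> nat -> nat -> nat -> C) (x : nat -> nat -> C) :
  Csum d (fun i => Csum d (fun j => Cmul (Csum d (fun p => Csum d (fun q => Cmul (a p q) (b p q i j)))) (x i j)))
  = Csum d (fun p => Csum d (fun q => Cmul (a p q) (Csum d (fun i => Csum d (fun j => Cmul (b p q i j) (x i j)))))).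
Proof.
  transitivity (Csum d (fun i => Csum d (fun j => Csum d (fun p => Csum d (fun q => Cmul (a p q) (Cmul (b p q i j) (x i j))))))).
  { apply Csum_ext; intros i _. apply Csum_ext; intros j _. rewrite Csum_scal_r.
    apply Csum_ext; intros p _. rewrite Csum_scal_r. apply Csum_ext; intros q _. cring. }
  transitivity (Csum d (fun p => Csum d (fun q => Csum d (fun i => Csum d (fun j => Cmul (a p q) (Cmul (b p q i j) (x i j))))))).
  { transitivity (Csum d (fun i => Csum d (fun p => Csum d (fun j => Csum d (fun q => Cmul (a p q) (Cmul (b p q i j) (x i j))))))).
    { apply Csum_ext; intros i _. apply Csum_swap. }
    transitivity (Csum d (fun i => Csum d (fun p => Csum d (fun q => Csum d (fun j => Cmul (a p q) (Cmul (b p q i j) (x i j))))))).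
    { apply Csum_ext; intros i _. apply Csum_ext; intros p _. apply Csum_swap. }
    rewrite Csum_swap. apply Csum_ext; intros p _. apply Csum_swap. }
  apply Csum_ext; intros p _. apply Csum_ext; intros q _. rewrite Csum_scal_l.
  apply Csum_ext; intros i _. rewrite Csum_scal_l. auto.
Qed.

Lemma apply_compose d K L A k l :
  apply d (compose d K L) A k l = apply d K (apply d L A) k l.
Proof. unfold apply, compose. apply rearr. Qed.

Lemma compose_assoc d K L N k l i j :
  compose d (compose d K L) N k l i j = compose d K (compose d L N) k l i j.
Proof. unfold compose. apply (rearr d (K k l) L (fun p q => N p q i j)). Qed.

Lemma tensor_compose d m K L X a al b be :
  apply_tensor_id d m (compose d K L) X a al b be =
  apply_tensor_id d m K (apply_tensor_id d m L X) a al b be.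
Proof. unfold apply_tensor_id, compose. apply (rearr d (K a b) L (fun i j => X i al j be)). Qed.

Lemma delta_eq i : delta i i = C1.
Proof. unfold delta. rewrite Nat.eqb_refl. auto. Qed.
Lemma delta_neq i j : i <> j -> delta i j = C0.
Proof. intros H. unfold delta. apply Nat.eqb_neq in H. rewrite H. auto. Qed.

Lemma apply_idop d A k l : (k < d)%nat -> (l < d)%nat -> apply d idop A k l = A k l.
Proof.
  intros Hk Hl. unfold apply, idop.
  rewrite (Csum_single d k).
  - rewrite (Csum_single d l). rewrite !delta_eq. cring. auto.
    intros j _ Hj. rewrite (delta_neq l j) by congruence. cring.
  - auto.
  - intros i _ Hi. apply Csum_zero. intros j _. rewrite (delta_neq k i) by congruence. cring.
Qed.

Lemma compose_idop d L k l i j : (k < d)%nat -> (l < d)%nat -> compose d idop L k l i j = L k l i j.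
Proof.
  intros Hk Hl. unfold compose, idop.
  rewrite (Csum_single d k).
  - rewrite (Csum_single d l). rewrite !delta_eq. cring. auto.
    intros q _ Hq. rewrite (delta_neq l q) by congruence. cring.
  - auto.
  - intros p _ Hp. apply Csum_zero. intros q _. rewrite (delta_neq k p) by congruence. cring.
Qed.

Lemma power_add d K a b k l i j : (k < d)%nat -> (l < d)%nat ->
  power d K (a + b) k l i j = compose d (power d K a) (power d K b) k l i j.
Proof.
  revert k l i j. induction a; intros k l i j Hk Hl.
  - simpl. rewrite compose_idop; auto.
  - simpl. rewrite compose_assoc. unfold compose at 1 3.
    apply Csum_ext; intros p Hp. apply Csum_ext; intros q Hq. rewrite IHa; auto.
Qed.

Lemma psd_ext d A B : (forall i j, (i < d)%nat -> (j < d)%nat -> A i j = B i j) -> psd d A -> psd d B.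
Proof.
  intros H HA v. specialize (HA v). cbv zeta in *.
  erewrite Csum_ext. exact HA. intros i Hi. simpl. apply Csum_ext. intros j Hj. rewrite H; auto.
Qed.

Lemma trace_ext d A B : (forall i, (i < d)%nat -> A i i = B i i) -> trace d A = trace d B.
Proof. intros H. unfold trace. apply Csum_ext. auto. Qed.

Lemma Csum1 f : Csum 1 f = f O.
Proof. simpl. cring. Qed.


Lemma chan_pos d phi A : quantum_channel d phi -> psd d A -> psd d (apply d phi A).
Proof.
  intros [Hcp _] HA.
  pose (X := fun (a al b be : nat) => A a b).
  assert (HX : bipsd d 1 X).
  { intros v. specialize (HA (fun i => v i O)). cbv zeta in *.
    erewrite Csum_ext. exact HA. intros a Ha. cbv beta. rewrite Csum1. apply Csum_ext.
    intros b Hb. rewrite Csum1. auto. }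
  specialize (Hcp 1%nat X HX).
  intros v. specialize (Hcp (fun a al => v a)). cbv zeta in *.
  erewrite Csum_ext. exact Hcp. intros a Ha. cbv beta. symmetry. rewrite Csum1. apply Csum_ext.
  intros b Hb. rewrite Csum1. auto.
Qed.

Lemma power_pos d phi n A : quantum_channel d phi -> psd d A -> psd d (apply d (power d phi n) A).
Proof.
  intros Hq HA. induction n; simpl.
  - eapply psd_ext; [|exact HA]. intros. rewrite apply_idop; auto.
  - eapply psd_ext; [|apply (chan_pos d phi _ Hq IHn)]. intros. rewrite apply_compose; auto.
Qed.

Lemma power_tp d phi n A : quantum_channel d phi -> trace d (apply d (power d phi n) A) = trace d A.
Proof.
  intros Hq. induction n; simpl.
  - apply trace_ext. intros. rewrite apply_idop; auto.
  - rewrite <- IHn. destruct Hq as [_ Htp]. rewrite <- (Htp (apply d (power d phi n) A)).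
    apply trace_ext. intros. apply apply_compose.
Qed.

Definition qf d (B : Mat) (v : nat -> C) : C :=
  Csum d (fun i => Csum d (fun j => Cmul (Cconj (v i)) (Cmul (B i j) (v j)))).

Lemma psd_qf d B v : psd d B -> Im (qf d B v) = 0 /\ 0 <= Re (qf d B v).
Proof. intros H. exact (H v). Qed.

Definition v1 k c : nat -> C := fun a => if Nat.eqb a k then c else C0.
Definition v2 k l c1 c2 : nat -> C := fun a => if Nat.eqb a k then c1 else if Nat.eqb a l then c2 else C0.

Lemma v1_k k c : v1 k c k = c.
Proof. unfold v1. rewrite Nat.eqb_refl. auto. Qed.
Lemma v1_o k c a : a <> k -> v1 k c a = C0.
Proof. intros H. unfold v1. apply Nat.eqb_neq in H. rewrite H. auto. Qed.
Lemma v2_k k l c1 c2 : v2 k l c1 c2 k = c1.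
Proof. unfold v2. rewrite Nat.eqb_refl. auto. Qed.
Lemma v2_l k l c1 c2 : k <> l -> v2 k l c1 c2 l = c2.
Proof. intros H. unfold v2. assert (l <> k) by auto. apply Nat.eqb_neq in H0. rewrite H0, Nat.eqb_refl. auto. Qed.
Lemma v2_o k l c1 c2 a : a <> k -> a <> l -> v2 k l c1 c2 a = C0.
Proof. intros H H'. unfold v2. apply Nat.eqb_neq in H. apply Nat.eqb_neq in H'. rewrite H, H'. auto. Qed.

Lemma quad1 d B k c : (k < d)%nat ->
  qf d B (v1 k c) = Cmul (Cconj c) (Cmul (B k k) c).
Proof.
  intros Hk. unfold qf. rewrite (Csum_single d k); auto.
  - rewrite (Csum_single d k); auto. rewrite v1_k; auto.
    intros j _ Hj. rewrite (v1_o k c j) by auto. cring.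
  - intros i _ Hi. apply Csum_zero. intros j _. rewrite (v1_o k c i) by auto. cring.
Qed.

Lemma quad2 d B k l c1 c2 : (k < d)%nat -> (l < d)%nat -> k <> l ->
  qf d B (v2 k l c1 c2) =
  Cadd (Cadd (Cmul (Cconj c1) (Cmul (B k k) c1)) (Cmul (Cconj c1) (Cmul (B k l) c2)))
       (Cadd (Cmul (Cconj c2) (Cmul (B l k) c1)) (Cmul (Cconj c2) (Cmul (B l l) c2))).
Proof.
  intros Hk Hl Hkl. unfold qf. rewrite (Csum_two d k l); auto.
  - rewrite (Csum_two d k l); auto.
    rewrite (Csum_two d k l); auto.
    + rewrite v2_k, v2_l; auto.
    + intros j _ H1 H2. rewrite (v2_o k l c1 c2 j) by auto. cring.
    + intros j _ H1 H2. rewrite (v2_o k l c1 c2 j) by auto. cring.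
  - intros i _ H1 H2. apply Csum_zero. intros j _. rewrite (v2_o k l c1 c2 i) by auto. cring.
Qed.

Lemma psd_entry_bound d B k l : psd d B -> (k < d)%nat -> (l < d)%nat ->
  Rabs (Re (B k l)) <= Re (trace d B) /\ Rabs (Im (B k l)) <= Re (trace d B).
Proof.
  intros HB Hk Hl.
  assert (Hdiag : forall i, (i < d)%nat -> Im (B i i) = 0 /\ 0 <= Re (B i i)).
  { intros i Hi. pose proof (psd_qf d B (v1 i C1) HB) as H. rewrite quad1 in H by auto.
    revert H. csimpl. intros [H1 H2]. split; lra. }
  assert (Htr : forall i, (i < d)%nat -> Re (B i i) <= Re (trace d B)).
  { intros i Hi. unfold trace. rewrite Re_Csum. apply (Rsum_term d (fun i => Re (B i i))); auto.
    intros; apply Hdiag; auto. }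
  destruct (Nat.eq_dec k l) as [<-|Hkl].
  - destruct (Hdiag k Hk). rewrite H. rewrite Rabs_R0. rewrite Rabs_right by lra.
    pose proof (Htr k Hk). lra.
  - pose proof (Hdiag k Hk). pose proof (Hdiag l Hl). pose proof (Htr k Hk). pose proof (Htr l Hl).
    pose proof (psd_qf d B (v2 k l C1 C1) HB) as Q1. rewrite quad2 in Q1 by auto.
    pose proof (psd_qf d B (v2 k l C1 (mkC (-1) 0)) HB) as Q2. rewrite quad2 in Q2 by auto.
    pose proof (psd_qf d B (v2 k l C1 (mkC 0 1)) HB) as Q3. rewrite quad2 in Q3 by auto.
    pose proof (psd_qf d B (v2 k l C1 (mkC 0 (-1))) HB) as Q4. rewrite quad2 in Q4 by auto.
    revert Q1 Q2 Q3 Q4. csimpl.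
    destruct (B k l) as [x y], (B l k) as [x' y'], (B k k) as [p p'], (B l l) as [r r']. simpl in *.
    intros. unfold Rabs. destruct (Rcase_abs x), (Rcase_abs y); split; lra.
Qed.

Definition E (i j : nat) : Mat := fun a b => Cmul (delta a i) (delta b j).
Definition Madd (A B : Mat) : Mat := fun a b => Cadd (A a b) (B a b).
Definition Mscal (c : C) (A : Mat) : Mat := fun a b => Cmul c (A a b).

Lemma apply_E d K i j k l : (i < d)%nat -> (j < d)%nat -> apply d K (E i j) k l = K k l i j.
Proof.
  intros Hi Hj. unfold apply, E. rewrite (Csum_single d i); auto.
  - rewrite (Csum_single d j); auto. rewrite !delta_eq. cring.
    intros b _ Hb. rewrite (delta_neq b j) by auto. cring.
  - intros a _ Ha. apply Csum_zero. intros b _. rewrite (delta_neq a i) by auto. cring.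
Qed.

Lemma apply_add d K A B k l : apply d K (Madd A B) k l = Cadd (apply d K A k l) (apply d K B k l).
Proof.
  unfold apply, Madd. rewrite <- Csum_add. apply Csum_ext; intros. rewrite <- Csum_add.
  apply Csum_ext; intros. cring.
Qed.

Lemma apply_scal d K c A k l : apply d K (Mscal c A) k l = Cmul c (apply d K A k l).
Proof.
  unfold apply, Mscal. rewrite Csum_scal_l. apply Csum_ext; intros. rewrite Csum_scal_l.
  apply Csum_ext; intros. cring.
Qed.

Lemma qf_add d A B v : qf d (Madd A B) v = Cadd (qf d A v) (qf d B v).
Proof.
  unfold qf, Madd. rewrite <- Csum_add. apply Csum_ext; intros. rewrite <- Csum_add.
  apply Csum_ext; intros. cring.
Qed.

Lemma qf_scal d c A v : qf d (Mscal c A) v = Cmul c (qf d A v).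
Proof.
  unfold qf, Mscal. rewrite Csum_scal_l. apply Csum_ext; intros. rewrite Csum_scal_l.
  apply Csum_ext; intros. cring.
Qed.

Lemma qf_E d i j v : (i < d)%nat -> (j < d)%nat -> qf d (E i j) v = Cmul (Cconj (v i)) (v j).
Proof.
  intros Hi Hj. unfold qf, E. rewrite (Csum_single d i); auto.
  - rewrite (Csum_single d j); auto. rewrite !delta_eq. cring.
    intros b _ Hb. rewrite (delta_neq b j) by auto. cring.
  - intros a _ Ha. apply Csum_zero. intros b _. rewrite (delta_neq a i) by auto. cring.
Qed.

Lemma trace_add d A B : trace d (Madd A B) = Cadd (trace d A) (trace d B).
Proof. unfold trace, Madd. apply Csum_add. Qed.
Lemma trace_scal d c A : trace d (Mscal c A) = Cmul c (trace d A).
Proof. unfold trace, Mscal. rewrite Csum_scal_l. auto. Qed.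
Lemma trace_E d i j : (i < d)%nat -> trace d (E i j) = delta i j.
Proof.
  intros Hi. unfold trace, E. rewrite (Csum_single d i); auto.
  - rewrite delta_eq. cring.
  - intros a _ Ha. rewrite (delta_neq a i) by auto. cring.
Qed.

Ltac sq2 x y := match goal with |- 0 <= ?e => replace e with (x*x + y*y) by ring end;
  pose proof (Rle_0_sqr x); pose proof (Rle_0_sqr y); unfold Rsqr in *; lra.

Definition F1 i j := Madd (Madd (E i i) (E j j)) (Madd (E i j) (E j i)).
Definition F2 i j := Madd (Madd (E i i) (E j j)) (Madd (Mscal (mkC 0 (-1)) (E i j)) (Mscal (mkC 0 1) (E j i))).

Lemma psd_Eii d i : (i < d)%nat -> psd d (E i i).
Proof.
  intros Hi v. cbv zeta. change (Im (qf d (E i i) v) = 0 /\ 0 <= Re (qf d (E i i) v)).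
  rewrite qf_E by auto. csimpl. destruct (v i) as [a1 a2]; simpl. split. ring.
  sq2 a1 a2.
Qed.

Lemma psd_F1 d i j : (i < d)%nat -> (j < d)%nat -> psd d (F1 i j).
Proof.
  intros Hi Hj v. cbv zeta. change (Im (qf d (F1 i j) v) = 0 /\ 0 <= Re (qf d (F1 i j) v)).
  unfold F1. rewrite !qf_add, !qf_E by auto. csimpl. destruct (v i) as [a1 a2], (v j) as [b1 b2]; simpl. split. ring. sq2 (a1+b1) (a2+b2).
Qed.

Lemma psd_F2 d i j : (i < d)%nat -> (j < d)%nat -> psd d (F2 i j).
Proof.
  intros Hi Hj v. cbv zeta. change (Im (qf d (F2 i j) v) = 0 /\ 0 <= Re (qf d (F2 i j) v)).
  unfold F2. rewrite !qf_add, !qf_scal, !qf_E by auto. csimpl. destruct (v i) as [a1 a2], (v j) as [b1 b2]; simpl. split. ring.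
  first [sq2 (a1+b2) (a2-b1) | sq2 (a1-b2) (a2+b1)].
Qed.

Lemma Re_trace_F d i j : (i < d)%nat -> (j < d)%nat -> i <> j ->
  Re (trace d (F1 i j)) = 2 /\ Re (trace d (F2 i j)) = 2 /\ Re (trace d (E i i)) = 1.
Proof.
  intros Hi Hj Hij. unfold F1, F2. rewrite !trace_add, !trace_scal, !trace_E by auto.
  rewrite !delta_eq, !delta_neq by auto. csimpl. lra.
Qed.

Lemma power_entry_bound d phi n k l i j : quantum_channel d phi ->
  (k < d)%nat -> (l < d)%nat -> (i < d)%nat -> (j < d)%nat ->
  Rabs (Re (power d phi n k l i j)) <= 4 /\ Rabs (Im (power d phi n k l i j)) <= 4.
Proof.
  intros Hq Hk Hl Hi Hj. set (P := power d phi n).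
  assert (HB : forall A, psd d A -> Rabs (Re (apply d P A k l)) <= Re (trace d A) /\
                                    Rabs (Im (apply d P A k l)) <= Re (trace d A)).
  { intros A HA. rewrite <- (power_tp d phi n A Hq). apply psd_entry_bound; auto.
    apply power_pos; auto. }
  destruct (Nat.eq_dec i j) as [<-|Hij].
  - pose proof (HB _ (psd_Eii d i Hi)). rewrite apply_E in H by auto.
    rewrite trace_E, delta_eq in H by auto. simpl in H. lra.
  - destruct (Re_trace_F d i j Hi Hj Hij) as [T1 [T2 T3]].
    destruct (Re_trace_F d j i Hj Hi ltac:(auto)) as [_ [_ T4]].
    pose proof (HB _ (psd_F1 d i j Hi Hj)) as B1. pose proof (HB _ (psd_F2 d i j Hi Hj)) as B2.
    pose proof (HB _ (psd_Eii d i Hi)) as B3. pose proof (HB _ (psd_Eii d j Hj)) as B4.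
    rewrite T1 in B1. rewrite T2 in B2. rewrite T3 in B3. rewrite T4 in B4.
    unfold F1, F2 in *. rewrite !apply_add, !apply_E in B1 by auto. rewrite !apply_add, !apply_scal, !apply_E in B2 by auto.
    rewrite !apply_E in B3, B4 by auto.
    revert B1 B2 B3 B4. csimpl.
    destruct (P k l i j) as [x y], (P k l j i) as [x' y'], (P k l i i) as [p p'], (P k l j j) as [r r']. simpl.
    unfold Rabs. repeat destruct Rcase_abs; intros; split; lra.
Qed.

Definition close d (A B : Superop) (dl : R) := forall k l i j, (k < d)%nat -> (l < d)%nat ->
  (i < d)%nat -> (j < d)%nat -> nb (Csub (A k l i j) (B k l i j)) <= dl.

Lemma Rsum_scal n c f : Rsum n (fun i => c * f i) = c * Rsum n f.
Proof. induction n; simpl. ring. rewrite IHn. ring. Qed.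

Lemma nb_Cconj z : nb (Cconj z) = nb z.
Proof. unfold nb; simpl. rewrite Rabs_Ropp. auto. Qed.

Lemma apply_diff d K K' A dl k l : (k < d)%nat -> (l < d)%nat -> close d K K' dl ->
  nb (Csub (apply d K A k l) (apply d K' A k l)) <=
  dl * Rsum d (fun i => Rsum d (fun j => nb (A i j))).
Proof.
  intros Hk Hl Hc. unfold apply. eapply Rle_trans. apply nb_diff_Csum.
  rewrite <- Rsum_scal. apply Rsum_le. intros i Hi.
  eapply Rle_trans. apply nb_diff_Csum. rewrite <- Rsum_scal. apply Rsum_le. intros j Hj.
  replace (Csub (Cmul (K k l i j) (A i j)) (Cmul (K' k l i j) (A i j)))
    with (Cmul (Csub (K k l i j) (K' k l i j)) (A i j)) by cring.
  eapply Rle_trans. apply nb_mul. apply Rmult_le_compat_r. apply nb_ge0. apply Hc; auto.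
Qed.

Lemma qf_apply_cont d A v : exists Cst, forall K K' dl, 0 <= dl -> close d K K' dl ->
  nb (Csub (qf d (apply d K A) v) (qf d (apply d K' A) v)) <= dl * Cst.
Proof.
  set (S := Rsum d (fun i => Rsum d (fun j => nb (A i j)))).
  exists (Rsum d (fun k => Rsum d (fun l => nb (v k) * (S * nb (v l))))).
  intros K K' dl Hdl Hc. unfold qf. eapply Rle_trans. apply nb_diff_Csum.
  rewrite <- Rsum_scal. apply Rsum_le. intros k Hk.
  eapply Rle_trans. apply nb_diff_Csum. rewrite <- Rsum_scal. apply Rsum_le. intros l Hl.
  replace (Csub (Cmul (Cconj (v k)) (Cmul (apply d K A k l) (v l)))
                (Cmul (Cconj (v k)) (Cmul (apply d K' A k l) (v l))))
    with (Cmul (Cconj (v k)) (Cmul (Csub (apply d K A k l) (apply d K' A k l)) (v l))) by cring.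
  eapply Rle_trans. apply nb_mul. rewrite nb_Cconj.
  pose proof (nb_ge0 (v k)). pose proof (nb_ge0 (v l)).
  pose proof (apply_diff d K K' A dl k l Hk Hl Hc). fold S in H1.
  pose proof (nb_mul (Csub (apply d K A k l) (apply d K' A k l)) (v l)).
  assert (nb (Cmul (Csub (apply d K A k l) (apply d K' A k l)) (v l)) <= dl * S * nb (v l)).
  { eapply Rle_trans. exact H2. apply Rmult_le_compat_r; auto. }
  replace (dl * (nb (v k) * (S * nb (v l)))) with (nb (v k) * (dl * S * nb (v l))) by ring.
  apply Rmult_le_compat_l; auto.
Qed.

Lemma trace_apply_cont d A : exists Cst, forall K K' dl, 0 <= dl -> close d K K' dl ->
  nb (Csub (trace d (apply d K A)) (trace d (apply d K' A))) <= dl * Cst.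
Proof.
  set (S := Rsum d (fun i => Rsum d (fun j => nb (A i j)))).
  exists (Rsum d (fun k => S)). intros K K' dl Hdl Hc. unfold trace.
  eapply Rle_trans. apply nb_diff_Csum. rewrite <- Rsum_scal. apply Rsum_le. intros k Hk.
  apply apply_diff; auto.
Qed.

Lemma small_zero z Cst : (forall dl, 0 < dl -> nb z <= dl * Cst) -> z = C0.
Proof.
  intros H. apply nb_zero. intros eps He.
  destruct (Rle_dec Cst 0).
  - pose proof (H 1 ltac:(lra)). lra.
  - pose proof (H (eps / (2 * Cst)) ltac:(apply Rdiv_lt_0_compat; lra)).
    replace (eps / (2 * Cst) * Cst) with (eps / 2) in H0 by (field; lra). lra.
Qed.

Lemma closure_pos d M :
  (forall eps, 0 < eps -> exists K, close d K M eps /\ (forall A, psd d A -> psd d (apply d K A)) /\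
       (forall A, trace d (apply d K A) = trace d A)) ->
  (forall A, psd d A -> psd d (apply d M A)) /\ (forall A, trace d (apply d M A) = trace d A).
Proof.
  intros H. split.
  - intros A HA v. cbv zeta. change (Im (qf d (apply d M A) v) = 0 /\ 0 <= Re (qf d (apply d M A) v)).
    destruct (qf_apply_cont d A v) as [Cst HC].
    assert (Hs : forall dl, 0 < dl -> exists K, nb (Csub (qf d (apply d K A) v) (qf d (apply d M A) v)) <= dl * Cst
              /\ Im (qf d (apply d K A) v) = 0 /\ 0 <= Re (qf d (apply d K A) v)).
    { intros dl Hdl. destruct (H dl Hdl) as [K [Hc [Hp _]]]. exists K. split.
      apply HC; auto; lra. apply (Hp A HA v). }
    split.
    + destruct (Req_dec (Im (qf d (apply d M A) v)) 0) as [h|h]; auto. exfalso.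
      set (x := Rabs (Im (qf d (apply d M A) v))). assert (0 < x) by (apply Rabs_pos_lt; auto).
      set (C' := Rabs Cst + 1).
      destruct (Hs (x / (2 * C')) ltac:(apply Rdiv_lt_0_compat; unfold C'; pose proof (Rabs_pos Cst); lra)) as [K [Hn [Hi _]]].
      unfold nb in Hn. simpl in Hn. rewrite Hi in Hn.
      assert (x / (2 * C') * Cst <= x / 2).
      { pose proof (Rle_abs Cst). pose proof (Rabs_pos Cst).
        replace (x / 2) with (x / (2 * C') * C') by (field; unfold C'; lra).
        apply Rmult_le_compat_l. apply Rlt_le, Rdiv_lt_0_compat; unfold C'; lra. unfold C'; lra. }
      fold x in Hn. replace (0 - Im (qf d (apply d M A) v)) with (- Im (qf d (apply d M A) v)) in Hn by ring.
      rewrite Rabs_Ropp in Hn. fold x in Hn. pose proof (Rabs_pos (Re (qf d (apply d K A) v) - Re (qf d (apply d M A) v))). lra.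
    + destruct (Rle_dec 0 (Re (qf d (apply d M A) v))) as [h|h]; auto. exfalso.
      set (x := - Re (qf d (apply d M A) v)). assert (0 < x) by (unfold x; lra).
      set (C' := Rabs Cst + 1).
      destruct (Hs (x / (2 * C')) ltac:(apply Rdiv_lt_0_compat; unfold C'; pose proof (Rabs_pos Cst); lra)) as [K [Hn [_ Hr]]].
      unfold nb in Hn. simpl in Hn.
      assert (x / (2 * C') * Cst <= x / 2).
      { pose proof (Rle_abs Cst). pose proof (Rabs_pos Cst).
        replace (x / 2) with (x / (2 * C') * C') by (field; unfold C'; lra).
        apply Rmult_le_compat_l. apply Rlt_le, Rdiv_lt_0_compat; unfold C'; lra. unfold C'; lra. }
      pose proof (Rle_abs (Re (qf d (apply d K A) v) - Re (qf d (apply d M A) v))).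
      pose proof (Rabs_pos (Im (qf d (apply d K A) v) - Im (qf d (apply d M A) v))). unfold x in *. lra.
  - intros A. destruct (trace_apply_cont d A) as [Cst HC].
    assert (Hz : Csub (trace d (apply d M A)) (trace d A) = C0).
    { apply (small_zero _ Cst). intros dl Hdl. destruct (H dl Hdl) as [K [Hc [_ Ht]]].
      rewrite <- (Ht A).
      replace (Csub (trace d (apply d M A)) (trace d (apply d K A))) with
        (Csub C0 (Csub (trace d (apply d K A)) (trace d (apply d M A)))) by cring.
      unfold nb; simpl. rewrite !Rminus_0_l, !Rabs_Ropp. apply HC; auto; lra. }
    apply Ceq; apply (f_equal Re) in Hz || idtac.
    + revert Hz. csimpl. lra.
    + assert (Hz2 : Csub (trace d (apply d M A)) (trace d A) = C0).
      { apply (small_zero _ Cst). intros dl Hdl. destruct (H dl Hdl) as [K [Hc [_ Ht]]].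
        rewrite <- (Ht A).
        replace (Csub (trace d (apply d M A)) (trace d (apply d K A))) with
          (Csub C0 (Csub (trace d (apply d K A)) (trace d (apply d M A)))) by cring.
        unfold nb; simpl. rewrite !Rminus_0_l, !Rabs_Ropp. apply HC; auto; lra. }
      apply (f_equal Im) in Hz2. revert Hz2. csimpl. lra.
Qed.

Lemma rearr2 d n (Mab : nat -> nat -> C) (p : nat -> R) (rho : nat -> Mat) (s : nat -> C) :
  Csum d (fun i => Csum d (fun j => Cmul (Mab i j) (Csum n (fun t => Cmul (RtoC (p t)) (Cmul (rho t i j) (s t))))))
  = Csum n (fun t => Cmul (RtoC (p t)) (Cmul (Csum d (fun i => Csum d (fun j => Cmul (Mab i j) (rho t i j)))) (s t))).
Proof.
  transitivity (Csum d (fun i => Csum d (fun j => Csum n (fun t => Cmul (RtoC (p t)) (Cmul (Cmul (Mab i j) (rho t i j)) (s t)))))).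
  { apply Csum_ext; intros i _. apply Csum_ext; intros j _. rewrite Csum_scal_l.
    apply Csum_ext; intros t _. cring. }
  transitivity (Csum n (fun t => Csum d (fun i => Csum d (fun j => Cmul (RtoC (p t)) (Cmul (Cmul (Mab i j) (rho t i j)) (s t)))))).
  { transitivity (Csum d (fun i => Csum n (fun t => Csum d (fun j => Cmul (RtoC (p t)) (Cmul (Cmul (Mab i j) (rho t i j)) (s t)))))).
    { apply Csum_ext; intros i _. apply Csum_swap. }
    apply Csum_swap. }
  apply Csum_ext; intros t _. rewrite Csum_scal_r, Csum_scal_l. apply Csum_ext; intros i _.
  rewrite Csum_scal_r, Csum_scal_l. auto.
Qed.

Lemma eb_compose d M L : (forall A, psd d A -> psd d (apply d M A)) ->
  (forall A, trace d (apply d M A) = trace d A) ->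
  entanglement_breaking d L -> entanglement_breaking d (compose d M L).
Proof.
  intros HP HT HL m X HX. destruct (HL m X HX) as [n [p [rho [sigma [Hst [Hsum Heq]]]]]].
  exists n, p, (fun t => apply d M (rho t)), sigma. split; [|split; auto].
  - intros t Ht. destruct (Hst t Ht) as [Hp [[Hr1 Hr2] Hs]]. split; [auto|split; [split; [apply HP; auto| rewrite HT; auto]|auto]].
  - intros a al b be Ha Hal Hb Hbe. rewrite tensor_compose. unfold apply_tensor_id at 1.
    transitivity (Csum d (fun i => Csum d (fun j => Cmul (M a b i j)
        (Csum n (fun t => Cmul (RtoC (p t)) (Cmul (rho t i j) (sigma t al be))))))).
    { apply Csum_ext; intros i Hi. apply Csum_ext; intros j Hj. rewrite Heq; auto. }
    rewrite rearr2. auto.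
Qed.

Lemma eb_ext d L L' : (forall k l i j, (k < d)%nat -> (l < d)%nat -> (i < d)%nat -> (j < d)%nat ->
  L k l i j = L' k l i j) -> entanglement_breaking d L -> entanglement_breaking d L'.
Proof.
  intros H HL m X HX. destruct (HL m X HX) as [n [p [rho [sigma [Hst [Hsum Heq]]]]]].
  exists n, p, rho, sigma. split; [auto|split; auto].
  intros a al b be Ha Hal Hb Hbe. rewrite <- Heq; auto. unfold apply_tensor_id.
  apply Csum_ext; intros i Hi. apply Csum_ext; intros j Hj. rewrite H; auto.
Qed.

Lemma choice2 (P : nat -> nat -> nat -> Prop) : (forall N t, exists n, P N t n) ->
  exists g : nat -> nat -> nat, forall N t, P N t (g N t).
Proof.
  intros H.
  exists (fun N t => proj1_sig (constructive_indefinite_description _ (H N t))).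
  intros N t. exact (proj2_sig (constructive_indefinite_description _ (H N t))).
Qed.

Lemma inv_small eta : 0 < eta -> exists T, forall t, (T <= t)%nat -> / INR (S t) <= eta.
Proof.
  intros He. destruct (archimed (/ eta)) as [Ha _].
  assert (Hz : (0 <= up (/ eta))%Z).
  { apply le_IZR. pose proof (Rinv_0_lt_compat eta He). lra. }
  exists (Z.to_nat (up (/ eta))). intros t Ht.
  assert (INR (S t) > / eta).
  { rewrite S_INR. apply le_INR in Ht. rewrite INR_IZR_INZ, Z2Nat.id in Ht by auto. lra. }
  assert (0 < / eta) by (apply Rinv_0_lt_compat; lra).
  replace eta with (/ / eta) by (field; lra).
  apply Rlt_le, Rinv_lt_contravar; auto. apply Rmult_lt_0_compat; lra.
Qed.

Lemma inv_pos t : 0 < / INR (S t).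
Proof. apply Rinv_0_lt_compat. apply lt_0_INR. lia. Qed.

Lemma inv_mono a b : (a <= b)%nat -> / INR (S b) <= / INR (S a).
Proof.
  intros H. apply Rinv_le_contravar. apply lt_0_INR; lia. apply le_INR; lia.
Qed.

Lemma lp_close d phi L : limit_point d phi L -> forall N t, exists n, (N <= n)%nat /\
  close d (power d phi n) L (/ INR (S t)).
Proof.
  intros H N t. destruct (H (/ INR (S t) / 2) ltac:(pose proof (inv_pos t); lra) N) as [n [Hn Hc]].
  exists n. split; auto. intros k l i j Hk Hl Hi Hj.
  pose proof (Hc k l i j Hk Hl Hi Hj). pose proof (nb_le_Cmod (Csub (power d phi n k l i j) (L k l i j))). lra.
Qed.

Lemma nb_Csub_sym x y : nb (Csub x y) = nb (Csub y x).
Proof. unfold nb; simpl. rewrite (Rabs_minus_sym (Re x)), (Rabs_minus_sym (Im x)). auto. Qed.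

Lemma compose_diff d A A' B B' k l i j c1 c2 d1 d2 :
  (k < d)%nat -> (l < d)%nat -> (i < d)%nat -> (j < d)%nat ->
  close d A A' d1 -> close d B B' d2 ->
  (forall p q, (p < d)%nat -> (q < d)%nat -> nb (B p q i j) <= c1) ->
  (forall p q, (p < d)%nat -> (q < d)%nat -> nb (A' k l p q) <= c2) ->
  0 <= d1 -> 0 <= c2 ->
  nb (Csub (compose d A B k l i j) (compose d A' B' k l i j)) <= INR d * (INR d * (d1 * c1 + c2 * d2)).
Proof.
  intros Hk Hl Hi Hj HA HB Hc1 Hc2 Hd1 Hc2p. unfold compose.
  eapply Rle_trans. apply nb_diff_Csum. apply Rsum_const_le. intros p Hp.
  eapply Rle_trans. apply nb_diff_Csum. apply Rsum_const_le. intros q Hq.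
  replace (Csub (Cmul (A k l p q) (B p q i j)) (Cmul (A' k l p q) (B' p q i j))) with
    (Cadd (Cmul (Csub (A k l p q) (A' k l p q)) (B p q i j)) (Cmul (A' k l p q) (Csub (B p q i j) (B' p q i j)))) by cring.
  eapply Rle_trans. apply nb_add.
  pose proof (nb_mul (Csub (A k l p q) (A' k l p q)) (B p q i j)).
  pose proof (nb_mul (A' k l p q) (Csub (B p q i j) (B' p q i j))).
  pose proof (HA k l p q Hk Hl Hp Hq). pose proof (HB p q i j Hp Hq Hi Hj).
  pose proof (Hc1 p q Hp Hq). pose proof (Hc2 p q Hp Hq).
  pose proof (nb_ge0 (B p q i j)). pose proof (nb_ge0 (A' k l p q)).
  pose proof (nb_ge0 (Csub (A k l p q) (A' k l p q))). pose proof (nb_ge0 (Csub (B p q i j) (B' p q i j))).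
  assert (nb (Csub (A k l p q) (A' k l p q)) * nb (B p q i j) <= d1 * c1).
  { apply Rmult_le_compat; auto. }
  assert (nb (A' k l p q) * nb (Csub (B p q i j) (B' p q i j)) <= c2 * d2).
  { apply Rmult_le_compat; auto. }
  lra.
Qed.

Definition idx d : list (nat * nat * nat * nat * bool) :=
  flat_map (fun k => flat_map (fun l => flat_map (fun i => flat_map (fun j =>
    (k,l,i,j,true)::(k,l,i,j,false)::nil) (seq 0 d)) (seq 0 d)) (seq 0 d)) (seq 0 d).

Lemma in_idx d k l i j b : (k < d)%nat -> (l < d)%nat -> (i < d)%nat -> (j < d)%nat ->
  In (k,l,i,j,b) (idx d).
Proof.
  intros. unfold idx. apply in_flat_map. exists k. split. apply in_seq; lia.
  apply in_flat_map. exists l. split. apply in_seq; lia.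
  apply in_flat_map. exists i. split. apply in_seq; lia.
  apply in_flat_map. exists j. split. apply in_seq; lia.
  destruct b; simpl; auto.
Qed.

Lemma in_idx_inv d k l i j b : In (k,l,i,j,b) (idx d) ->
  (k < d)%nat /\ (l < d)%nat /\ (i < d)%nat /\ (j < d)%nat.
Proof.
  unfold idx. intros H.
  apply in_flat_map in H. destruct H as [k' [Hk H]].
  apply in_flat_map in H. destruct H as [l' [Hl H]].
  apply in_flat_map in H. destruct H as [i' [Hi H]].
  apply in_flat_map in H. destruct H as [j' [Hj H]].
  apply in_seq in Hk, Hl, Hi, Hj.
  simpl in H. destruct H as [H|[H|[]]]; inversion H; subst; lia.
Qed.

Lemma key d phi L1 L2 : quantum_channel d phi -> limit_point d phi L1 -> entanglement_breaking d L1 ->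
  limit_point d phi L2 -> entanglement_breaking d L2.
Proof.
  intros Hq H1 HE1 H2.
  destruct (choice2 _ (lp_close d phi L1 H1)) as [g1 Hg1].
  destruct (choice2 _ (lp_close d phi L2 H2)) as [g2 Hg2].
  set (nn := fun k => g1 k k).
  set (mm := fun k => g2 (nn k + k)%nat k).
  set (e := fun k => (mm k - nn k)%nat).
  assert (Hnn : forall k, (k <= nn k)%nat /\ close d (power d phi (nn k)) L1 (/ INR (S k))).
  { intro k. apply Hg1. }
  assert (Hmm : forall k, (nn k + k <= mm k)%nat /\ close d (power d phi (mm k)) L2 (/ INR (S k))).
  { intro k. apply Hg2. }
  assert (Hem : forall k, mm k = (e k + nn k)%nat).
  { intro k. unfold e. destruct (Hmm k). lia. }
  assert (Hbd : forall n k l i j, (k < d)%nat -> (l < d)%nat -> (i < d)%nat -> (j < d)%nat ->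
     nb (power d phi n k l i j) <= 8).
  { intros. destruct (power_entry_bound d phi n k l i j Hq H H0 H3 H4). unfold nb. lra. }
  set (f := fun (x : nat * nat * nat * nat * bool) t =>
     match x with (k,l,i,j,b) => if b then Re (power d phi (e t) k l i j) else Im (power d phi (e t) k l i j) end).
  destruct (BWmulti _ f 4 (idx d)) as [sg [g [Hsg Hconv]]].
  { intros [[[[k l] i] j] b] t Hin. apply in_idx_inv in Hin. destruct Hin as [? [? [? ?]]].
    destruct (power_entry_bound d phi (e t) k l i j Hq); auto. unfold f. destruct b; auto. }
  set (M := fun k l i j => mkC (g (k,l,i,j,true)) (g (k,l,i,j,false))).
  assert (HsgT : forall t, (t <= sg t)%nat).
  { induction t; [lia|]. specialize (Hsg t). lia. }
  assert (Hcl : forall eps, 0 < eps -> exists T, forall t, (T <= t)%nat ->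
     close d (power d phi (e (sg t))) M eps).
  { intros eps He. destruct (Hconv (eps/2) ltac:(lra)) as [T HT]. exists T. intros t Ht k l i j Hk Hl Hi Hj.
    pose proof (HT t Ht (k,l,i,j,true) (in_idx d k l i j true Hk Hl Hi Hj)).
    pose proof (HT t Ht (k,l,i,j,false) (in_idx d k l i j false Hk Hl Hi Hj)).
    unfold f in *. unfold nb, M. simpl. lra. }
  assert (HMb : forall k l i j, (k < d)%nat -> (l < d)%nat -> (i < d)%nat -> (j < d)%nat -> nb (M k l i j) <= 9).
  { intros k l i j Hk Hl Hi Hj. destruct (Hcl 1 ltac:(lra)) as [T HT].
    pose proof (HT T (le_n _) k l i j Hk Hl Hi Hj).
    pose proof (Hbd (e (sg T)) k l i j Hk Hl Hi Hj).
    replace (M k l i j) with (Cadd (power d phi (e (sg T)) k l i j) (Csub (M k l i j) (power d phi (e (sg T)) k l i j))) by cring.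
    eapply Rle_trans. apply nb_add. rewrite nb_Csub_sym. lra. }
  destruct (closure_pos d M) as [HMP HMT].
  { intros eps He. destruct (Hcl eps He) as [T HT]. exists (power d phi (e (sg T))).
    split. apply HT; auto. split. intros; apply power_pos; auto. intros; apply power_tp; auto. }
  apply (eb_ext d (compose d M L1)); [| apply eb_compose; auto].
  intros k l i j Hk Hl Hi Hj.
  assert (Hz : Csub (L2 k l i j) (compose d M L1 k l i j) = C0).
  2:{ apply (f_equal Re) in Hz as HR. apply (f_equal Im) in Hz as HI. revert HR HI. csimpl. intros.
      symmetry. apply Ceq; lra. }
  apply nb_zero. intros eps He.
  set (D := INR d). assert (HD : 0 <= D) by apply pos_INR.
  set (dl := eps / (4 * (8 * D * D + 1))).
  assert (Hdl : 0 < dl) by (unfold dl; apply Rdiv_lt_0_compat; nra).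
  assert (Hdl2 : D * (D * (dl * 8 + 9 * 0)) <= eps / 4).
  { unfold dl. replace (D * (D * (eps / (4 * (8 * D * D + 1)) * 8 + 9 * 0))) with
      ((eps / 4) * (8 * D * D / (8 * D * D + 1))) by (field; nra).
    assert (8 * D * D / (8 * D * D + 1) <= 1).
    { apply Rmult_le_reg_r with (8 * D * D + 1). nra. unfold Rdiv. rewrite Rmult_assoc, Rinv_l by nra. nra. }
    nra. }
  set (eta := eps / (4 * (9 * D * D + 1))).
  assert (Heta : 0 < eta) by (unfold eta; apply Rdiv_lt_0_compat; nra).
  assert (Heta2 : forall x, 0 <= x -> x <= eta -> D * (D * (0 * 8 + 9 * x)) <= eps / 4 /\ x <= eps / 4).
  { intros x Hx0 Hx. unfold eta in Hx.
    assert ((9 * D * D + 1) * x <= eps / 4).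
    { apply Rmult_le_reg_l with (/ (9 * D * D + 1)). apply Rinv_0_lt_compat; nra.
      rewrite <- Rmult_assoc, Rinv_l by nra. replace (eps / (4 * (9 * D * D + 1))) with (/ (9 * D * D + 1) * (eps / 4)) in Hx by (field; nra).
      lra. }
    split; nra. }
  destruct (Hcl dl Hdl) as [T1 HT1]. destruct (inv_small eta Heta) as [T2 HT2].
  set (t := Nat.max T1 T2). set (a := sg t). set (N := nn a).
  assert (Ht1 : close d (power d phi (e a)) M dl) by (apply HT1; unfold t; lia).
  assert (Hia : / INR (S a) <= eta).
  { apply HT2. pose proof (HsgT t). unfold a, t in *. lia. }
  destruct (Hnn a) as [HNa HN1]. fold N in HN1, HNa.
  destruct (Hmm a) as [_ HM2].
  pose proof (inv_pos a) as Hpa.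
  assert (E1 : nb (Csub (L2 k l i j) (power d phi (mm a) k l i j)) <= eta).
  { rewrite nb_Csub_sym. pose proof (HM2 k l i j Hk Hl Hi Hj). lra. }
  assert (E2 : power d phi (mm a) k l i j = compose d (power d phi (e a)) (power d phi N) k l i j).
  { rewrite Hem. apply power_add; auto. }
  assert (Hc0 : forall A : Superop, close d A A 0).
  { intros A k' l' i' j' _ _ _ _. unfold nb; simpl. rewrite !Rminus_diag, Rabs_R0. lra. }
  assert (E3 : nb (Csub (compose d (power d phi (e a)) (power d phi N) k l i j)
                       (compose d M (power d phi N) k l i j)) <= D * (D * (dl * 8 + 9 * 0))).
  { apply compose_diff; auto; try (intros; apply Hbd; auto; fail); try (intros; apply HMb; auto; fail); lra. }
  assert (E4 : nb (Csub (compose d M (power d phi N) k l i j)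
                       (compose d M L1 k l i j)) <= D * (D * (0 * 8 + 9 * / INR (S a)))).
  { apply compose_diff; auto; try (intros; apply Hbd; auto; fail); try (intros; apply HMb; auto; fail); lra. }
  destruct (Heta2 (/ INR (S a)) ltac:(lra) Hia) as [E5 E6].
  replace (Csub (L2 k l i j) (compose d M L1 k l i j)) with
    (Cadd (Csub (L2 k l i j) (power d phi (mm a) k l i j))
      (Cadd (Csub (compose d (power d phi (e a)) (power d phi N) k l i j)
                       (compose d M (power d phi N) k l i j))
            (Csub (compose d M (power d phi N) k l i j)
                       (compose d M L1 k l i j)))) by (rewrite E2; cring).
  eapply Rle_lt_trans. apply nb_add. eapply Rle_lt_trans. apply Rplus_le_compat_l. apply nb_add.
  assert (eta <= eps / 4).
  { unfold eta. apply Rmult_le_reg_l with (4 * (9 * D * D + 1)). nra.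
    replace (4 * (9 * D * D + 1) * (eps / (4 * (9 * D * D + 1)))) with eps by (field; nra). nra. }
  lra.
Qed.

Theorem mainTheorem14 (d : nat) (phi : Superop) (Hphi : quantum_channel d phi) :
  (forall psi : Superop, limit_point d phi psi -> entanglement_breaking d psi) \/
  (forall psi : Superop, limit_point d phi psi -> ~ entanglement_breaking d psi).
Proof.
  destruct (classic (exists psi, limit_point d phi psi /\ entanglement_breaking d psi)) as [[L1 [H1 H2]]|Hn].
  - left. intros psi Hp. apply (key d phi L1 psi); auto.
  - right. intros psi Hp He. apply Hn. exists psi. auto.
Qed.
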